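(* Let $f(t)=at^2+bt+c\in\mathbb{Z}[t]$ be irreducible over $\mathbb{Q}$ with $a\ne 0$, and let $\alpha$ be a root of $f$ in its splitting field. Then for any $k\in\mathbb{N}$ there exist integers $m,n,A,B$ with $A\ne 0$ and $\gcd(A,B)=1$ such that $(ma\alpha+n)^k=A\alpha+B$. *)

(* Defs.v *)
From mathcomp Require Import all_boot all_order all_algebra all_field.
Set Implicit Arguments. Unset Strict Implicit. Unset Printing Implicit Defensive.
Import GRing.Theory Num.Theory.
Local Open Scope ring_scope.

Definition quadQ (a b c : int) : {poly rat} :=
  (a%:~R) *: 'X^2 + (b%:~R) *: 'X + (c%:~R)%:P.

(* Main.v *)
Require Import Defs.
From mathcomp Require Import all_boot all_order all_algebra all_field.
From mathcomp Require Import ring lra zify.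
Import GRing.Theory Num.Theory.
Local Open Scope ring_scope.

Fixpoint seqQP (m D : int) (j : nat) : int * int :=
  if j is j'.+1 then let qp := seqQP m D j' in (qp.1 + m * D * qp.2, qp.2 + m * qp.1)
  else (1, 0).

Lemma seqQP_eval (g : algC) (m D : int) : g ^+ 2 = D%:~R -> forall j,
  (1 + m%:~R * g) ^+ j = (seqQP m D j).1%:~R + (seqQP m D j).2%:~R * g.
Proof.
move=> hg; elim=> [|j IH] /=; first by rewrite expr0; ring.
rewrite exprSr IH.
set q := (seqQP m D j).1; set p := (seqQP m D j).2.
have -> : (q%:~R + p%:~R * g) * (1 + m%:~R * g) =
   (q%:~R + p%:~R * m%:~R * g^+2) + (p%:~R + m%:~R * q%:~R) * g :> algC by ring.
rewrite hg; ring.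
Qed.

Lemma seqQP_norm (m D : int) j :
  (seqQP m D j).1 ^+ 2 - D * (seqQP m D j).2 ^+ 2 = (1 - m ^+ 2 * D) ^+ j.
Proof.
elim: j => [|j IH] /=; first by rewrite expr0; ring.
rewrite [RHS]exprSr -IH; ring.
Qed.

Lemma seqQP_modm (m D : int) j : exists u v : int,
  (seqQP m D j).1 = 1 + m * u /\ (seqQP m D j).2 = m * (j%:Z + m * v).
Proof.
elim: j => [|j [u [v [h1 h2]]]] /=; first by exists 0, 0; split; ring.
rewrite h1 h2; exists (u + D * m * (j%:Z + m * v)), (v + u); split; first ring.
rewrite -addn1 PoszD; ring.
Qed.

Lemma seqQP_modd (m D d e : int) : 1 - m ^+ 2 * D = d * e -> forall j, exists u v : int,
  (seqQP m D j.+1).1 = 2 ^+ j + d * u /\ (seqQP m D j.+1).2 = 2 ^+ j * m + d * v.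
Proof.
move=> hN; elim=> [|j [u [v [h1 h2]]]]; first by exists 0, 0; split => /=; ring.
rewrite /= in h1 h2 *; rewrite h1 h2.
exists (u + m * D * v - 2 ^+ j * e), (v + m * u); split; last by rewrite exprS; ring.
apply/eqP; rewrite -subr_eq0.
have -> : 2 ^+ j + d * u + m * D * (2 ^+ j * m + d * v) -
  (2 ^+ j.+1 + d * (u + m * D * v - 2 ^+ j * e)) = - 2 ^+ j * ((1 - m ^+ 2 * D) - d * e).
  by rewrite exprS; ring.
by rewrite hN subrr mulr0.
Qed.
Lemma root_eq (a b c : int) (alpha : algC) :
  root (map_poly (ratr : rat -> algC) (quadQ a b c)) alpha ->
  a%:~R * alpha ^+ 2 + b%:~R * alpha + c%:~R = 0.
Proof.
move=> /rootP; rewrite /quadQ !rmorphD /= !map_polyZ /= map_polyXn map_polyX map_polyC /=.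
by rewrite !hornerE !rmorph_int.
Qed.

Lemma notdvd1 (p : nat) : prime p -> ~~ (p%:Z %| 1)%Z.
Proof. by move=> pp; rewrite dvdz1 /=; case: p pp => [|[|]]. Qed.
Theorem lemma4p1 (a b c : int) (alpha : algC) (k : nat) :
  a != 0 ->
  irreducible_poly (quadQ a b c) ->
  root (map_poly (ratr : rat -> algC) (quadQ a b c)) alpha ->
  (0 < k)%N ->
  exists m n A B : int,
    [/\ A != 0, gcdz A B = 1%N &
        ((m * a)%:~R * alpha + n%:~R) ^+ k = A%:~R * alpha + B%:~R].
Proof.
move=> a0 _ hr k0.
have hroot := @root_eq _ _ _ _ hr.
set D : int := b ^+ 2 - 4 * a * c.
set m0 : int := 2 * a * (k.+1)%:Z.
set g : algC := (2 * a)%:~R * alpha + b%:~R.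
have hg : g ^+ 2 = D%:~R.
  rewrite /g /D.
  transitivity (4%:~R * a%:~R * (a%:~R * alpha ^+ 2 + b%:~R * alpha + c%:~R)
     + (b ^+ 2 - 4 * a * c)%:~R : algC); first by ring.
  by rewrite hroot mulr0 add0r.
set Q := (seqQP m0 D k).1; set P := (seqQP m0 D k).2.
have hev := @seqQP_eval g m0 D hg k.
exists (2 * m0), (1 + m0 * b), (2 * a * P), (Q + b * P).
have [u [v [hQ hP]]] := seqQP_modm m0 D k.
rewrite -/Q in hQ; rewrite -/P in hP.
have m0n0 : m0 != 0 by rewrite /m0 !mulf_neq0.
have Pn0 : P != 0.
  rewrite hP mulf_neq0 //; apply/negP => h.
  move: h; rewrite addr_eq0 => /eqP h.
  have := congr1 absz h; rewrite abszN abszM /m0 !abszM /= => hk.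
  have : (0 < `|a|)%N by rewrite absz_gt0.
  move=> ha; move: hk; case: (absz v) => [|w]; first by rewrite muln0; lia.
  move: ha; case: (absz a) => [|x] // _ hk.
  have : (2 * k.+1 <= k)%N.
    rewrite [X in (_ <= X)%N]hk -!mulnA leq_mul2l /=.
    by rewrite mulnCA -[X in (X <= _)%N]muln1 leq_mul.
  lia.
have An0 : 2 * a * P != 0 by rewrite !mulf_neq0.
split => //; last first.
  have -> : ((2 * m0 * a)%:~R * alpha + (1 + m0 * b)%:~R : algC) = 1 + m0%:~R * g
    by rewrite /g; ring.
  by rewrite hev /g; ring.
apply/eqP; apply: contraT => hne.
have gn0 : gcdz (2 * a * P) (Q + b * P) != 0%N by rewrite gcdz_eq0 negb_and An0.
have gdef : gcdz (2 * a * P) (Q + b * P) = (gcdn `|2 * a * P| `|Q + b * P|)%:Z by [].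
rewrite gdef in gn0 hne.
have g1 : (1 < gcdn `|(2 * a * P)%R| `|(Q + b * P)%R|)%N.
  by move: gn0 hne; case: (gcdn _ _) => [|[|]].
set p := pdiv (gcdn `|2 * a * P| `|Q + b * P|).
have pp := pdiv_prime g1.
have pg : (p%:Z %| (gcdz (2 * a * P) (Q + b * P))%R)%Z by rewrite gdef dvdzE /= pdiv_dvd.
have pA : (p%:Z %| (2 * a * P)%R)%Z := dvdz_trans pg (dvdz_gcdl _ _).
have pB : (p%:Z %| (Q + b * P)%R)%Z := dvdz_trans pg (dvdz_gcdr _ _).
have n1 := @notdvd1 p pp.
move: pA; rewrite dvdzE abszM Euclid_dvdM // => /orP [pa | pP].
  have pa' : (p%:Z %| (2 * a)%R)%Z by rewrite dvdzE.
  have hB : Q + b * P = 1 + (2 * a) * ((k.+1)%:Z * (u + b * (k%:Z + m0 * v)))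
    by rewrite hQ hP /m0; ring.
  have : (p%:Z %| (1)%R)%Z.
    have -> : (1 : int) = (Q + b * P) - (2 * a) * ((k.+1)%:Z * (u + b * (k%:Z + m0 * v))).
      by rewrite hB; ring.
    by rewrite rpredB // dvdz_mulr.
  by rewrite (negbTE n1).
have pP' : (p%:Z %| (P)%R)%Z by rewrite dvdzE.
have pQ : (p%:Z %| (Q)%R)%Z.
  have -> : Q = (Q + b * P) - b * P by ring.
  by rewrite rpredB // dvdz_mull.
have hN := seqQP_norm m0 D k.
have : (p%:Z %| ((1 - m0 ^+ 2 * D) ^+ k)%R)%Z.
  rewrite -hN rpredB //; first exact: dvdz_exp.
  by apply: dvdz_mull; apply: dvdz_exp.
rewrite dvdzE abszX Euclid_dvdX // k0 andbT => pN.
have pN' : (p%:Z %| (1 - m0 ^+ 2 * D)%R)%Z by rewrite dvdzE.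
have [e he] := dvdzP pN'.
have hpe : 1 - m0 ^+ 2 * D = p%:Z * e by rewrite he mulrC.
have [u2 [v2 [h1 _]]] := @seqQP_modd m0 D p e hpe k.-1.
rewrite (prednK k0) in h1.
have : (p%:Z %| (2 ^+ k.-1)%R)%Z.
  have -> : (2 : int) ^+ k.-1 = Q - p%:Z * u2 by rewrite /Q h1; ring.
  by rewrite rpredB // dvdz_mulr.
rewrite dvdzE abszX Euclid_dvdX // => /andP [p2 _].
have p2' : (p%:Z %| (2)%R)%Z by rewrite dvdzE.
have : (p%:Z %| (1)%R)%Z.
  have -> : (1 : int) = (1 - m0 ^+ 2 * D) + 2 * (2 * a ^+ 2 * (k.+1)%:Z ^+ 2 * D)
    by rewrite /m0; ring.
  by rewrite rpredD // dvdz_mulr.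
by rewrite (negbTE n1).
Qed.
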